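(* Let $V$ be a real vector space and $X\subseteq V$. If $X$ contains convexly independent subsets of arbitrarily large finite size, then $X$ contains an infinite convexly independent subset.
   Context: A subset $Y\subseteq V$ is convexly independent if $y\notin\mathrm{conv}(Y\setminus\{y\})$ for every $y\in Y$, where $\mathrm{conv}$ denotes the convex hull. *)

(* Defs.v *)
From HB Require Import structures.
From mathcomp Require Import all_boot all_order all_algebra.
From mathcomp Require Import boolp classical_sets cardinality reals.
Set Implicit Arguments. Unset Strict Implicit. Unset Printing Implicit Defensive.
Import Order.TTheory GRing.Theory Num.Theory.
Local Open Scope classical_set_scope.
Local Open Scope ring_scope.

Definition conv (R : realType) (V : lmodType R) (Y : set V) : set V :=
  [set v | exists (n : nat) (w : 'I_n -> R) (p : 'I_n -> V),
      [/\ forall i, 0 <= w i, \sum_(i < n) w i = 1,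
          forall i, Y (p i) & v = \sum_(i < n) w i *: p i]].

Definition conv_indep (R : realType) (V : lmodType R) (Y : set V) : Prop :=
  forall y, Y y -> ~ conv (Y `\ y) y.

(* Main.v *)
Require Import Defs.
From HB Require Import structures.
From mathcomp Require Import all_boot all_order all_algebra.
From mathcomp Require Import boolp classical_sets cardinality reals.
From mathcomp Require Import ring lra.
Set Implicit Arguments. Unset Strict Implicit. Unset Printing Implicit Defensive.
Import Order.TTheory GRing.Theory Num.Theory.
Local Open Scope classical_set_scope.

Lemma infNP (A : set nat) :
  infinite_set A <-> forall n, exists m, (n <= m)%N /\ A m.
Proof.
split.
- move=> Ainf n; apply: contrapT => hn; apply: Ainf.
  apply: (@sub_finite_set _ _ `I_n); last exact: finite_II.
  move=> m Am /=; rewrite ltnNge; apply/negP => nm; apply: hn; by exists m.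
- move=> H Afin.
  pose s := finmap.enum_fset (fset_set A).
  have [m [lem Am]] := H (\max_(x <- s) x).+1.
  have : (m \in s).
    have := @in_fset_set _ A Afin m. rewrite /s. move=> ->. by rewrite inE.
  move=> ms.
  have : (m <= \max_(x <- s) x)%N by apply: leq_bigmax_seq.
  by rewrite leqNgt lem.
Qed.

Lemma inf_image (T : Type) (A : set nat) (f : nat -> T) :
  injective f -> infinite_set A -> infinite_set (f @` A).
Proof.
move=> fi Ai fin; apply: Ai.
move: fin; rewrite (eq_finite_set (@inj_card_eq _ _ A f (fun x y _ _ => @fi x y))).
by [].
Qed.


Lemma pigeon (T : finType) (A : set nat) (f : nat -> T) :
  infinite_set A -> exists c, infinite_set (A `&` [set n | f n = c]).
Proof.
move=> Ai; apply: contrapT => hn; apply: Ai.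
apply: (@sub_finite_set _ _ (\bigcup_(c in [set: T]) (A `&` [set n | f n = c]))).
  by move=> n An; exists (f n) => //.
apply: bigcup_finite; first exact: finite_finset.
move=> c _; apply: contrapT => ci; apply: hn; by exists c.
Qed.

Lemma minimum (A : set nat) : A !=set0 -> exists a, A a /\ forall x, A x -> (a <= x)%N.
Proof.
move=> [x Ax].
have ex : exists n, (fun n => `[< A n >]) n by exists x; apply/asboolP.
case: (ex_minnP ex) => m /asboolP Am mmin; exists m; split => // y Ay.
by apply: mmin; apply/asboolP.
Qed.

Lemma diag (T : finType) (P : nat -> set nat -> T -> Prop) (A0 : set nat) :
  (forall a A B c, B `<=` A -> P a A c -> P a B c) ->
  (forall a A, infinite_set A -> exists A' c, A' `<=` A /\ infinite_set A' /\ P a A' c) ->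
  infinite_set A0 ->
  exists B c, B `<=` A0 /\ infinite_set B /\
     forall i, B i -> P i [set x | B x /\ (i < x)%N] c.
Proof.
move=> Pdown Pex A0i.
have step : forall A : set nat, exists g : nat * set nat * T,
   infinite_set A -> [/\ A g.1.1, (forall x, A x -> (g.1.1 <= x)%N),
     g.1.2 `<=` A, (forall x, g.1.2 x -> (g.1.1 < x)%N) &
     infinite_set g.1.2 /\ P g.1.1 g.1.2 g.2].
  move=> A; case: (pselect (infinite_set A)) => Ai; last first.
    by have [A' [c0 _]] := Pex 0%N A0 A0i; exists (0%N, A, c0).
  have [a [Aa amin]] := minimum (infinite_setN0 Ai).
  have Ai' : infinite_set (A `&` [set x | (a < x)%N]).
    apply: infinite_setIl => //.
    apply: (@sub_finite_set _ _ `I_a.+1); last exact: finite_II.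
    by move=> x /= /negP; rewrite -leqNgt ltnS.
  have [A' [c [A'sub [A'i PA']]]] := Pex a _ Ai'.
  exists (a, A', c) => _ /=; split => //.
  - by move=> x /A'sub [].
  - by move=> x /A'sub [].
have [G HG] := choice step.
pose As := fun n => iter n (fun A => (G A).1.2) A0.
pose a := fun n => (G (As n)).1.1.
pose c := fun n => (G (As n)).2.
have Asi : forall n, infinite_set (As n).
  elim=> [|n IH] //=.
  by have [_ _ _ _ []] := HG _ IH.
have HGn := fun n => HG _ (Asi n).
have AsS : forall n, As n.+1 = (G (As n)).1.2 by [].
have Asmono : forall m n, (m <= n)%N -> As n `<=` As m.
  move=> m n /subnKC <-; elim: (n - m)%N => [|k IH]; first by rewrite addn0.
  rewrite addnS AsS; have [_ _ sub _ _] := HGn (m + k)%N.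
  exact: subset_trans sub IH.
have aA : forall n, As n (a n) by move=> n; have [] := HGn n.
have aincr : forall n, (a n < a n.+1)%N.
  by move=> n; have [_ _ _ gt _] := HGn n; apply: gt; rewrite -AsS; apply: aA.
have ainc : {homo a : i j / (i < j)%N >-> (i < j)%N} := homo_ltn ltn_trans aincr.
have ainj : injective a.
  move=> m n amn; case: (ltngtP m n) => // h.
  - by have := ainc _ _ h; rewrite amn ltnn.
  - by have := ainc _ _ h; rewrite amn ltnn.
have [col Icol] := pigeon c (@infinite_nat).
exists (a @` (setT `&` [set n | c n = col])), col; split; [|split].
- move=> x [n _ <-]; exact: (Asmono 0%N n (leq0n n) _ (aA n)).
  idtac.
- exact: inf_image.
- move=> i [m [_ cm] <-].
  have [_ _ _ _ [_ Pm]] := HGn m.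
  have Pm' : P (a m) (As m.+1) (c m) := Pm.
  rewrite cm in Pm'; apply: Pdown Pm'.
  move=> x [[n [_ cn] <-] lt].
  have mn : (m < n)%N.
    case: (ltnP m n) => // h; have := ltnW_homo ainc h; by rewrite leqNgt lt.
  exact: (Asmono m.+1 n mn _ (aA n)).
Qed.

Lemma ramsey2 (T : finType) (A0 : set nat) (f : nat -> nat -> T) :
  infinite_set A0 -> exists B c, B `<=` A0 /\ infinite_set B /\
     forall i j, B i -> B j -> (i < j)%N -> f i j = c.
Proof.
move=> A0i.
have [B [c [BA [Bi HB]]]] := @diag T (fun a A c => forall x, A x -> f a x = c) A0
  (fun a A B c sub h x Bx => h x (sub x Bx))
  (fun a A Ai => let: ex_intro c h := pigeon (f a) Ai in
     ex_intro _ _ (ex_intro _ c (conj (@subIsetl _ _ _) (conj h (fun x hx => proj2 hx))))) A0i.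
exists B, c; split => //; split => // i j Bi' Bj ij.
exact: HB i Bi' j (conj Bj ij).
Qed.

Lemma ramsey3 (T : finType) (f : nat -> nat -> nat -> T) :
  exists B c, infinite_set B /\
     forall i j k, B i -> B j -> B k -> (i < j)%N -> (j < k)%N -> f i j k = c.
Proof.
have [B [c [_ [Bi HB]]]] := @diag T
  (fun a A c => forall x y, A x -> A y -> (x < y)%N -> f a x y = c) setT
  (fun a A B c sub h x y Bx By => h x y (sub x Bx) (sub y By))
  (fun a A Ai => let: ex_intro B (ex_intro c (conj sub (conj Bi h))) := ramsey2 (f a) Ai in
     ex_intro _ B (ex_intro _ c (conj sub (conj Bi h)))) infinite_nat.
exists B, c; split => // i j k Bi' Bj Bk ij jk.
exact: HB i Bi' j k (conj Bj ij) (conj Bk (ltn_trans ij jk)) jk.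
Qed.

Local Open Scope ring_scope.


Lemma seq_build (T : Type) (P : seq T -> T -> Prop) :
  (forall C, exists x, P C x) ->
  exists p : nat -> T, forall n, P [seq p i | i <- iota 0 n] (p n).
Proof.
move=> h; have [nxt Hn] := choice h.
pose pre := fix pre n := if n is n'.+1 then rcons (pre n') (nxt (pre n')) else [::].
exists (fun n => nxt (pre n)) => n.
suff -> : [seq nxt (pre i) | i <- iota 0 n] = pre n by apply: Hn.
elim: n => [|n IH]; first by [].
by rewrite -addn1 iotaD map_cat IH cats1 addn1.
Qed.

Section G1.
Context (R : realType) (V : lmodType R).

Definition coll (a b x : V) := exists t : R, x = a + t *: (b - a).

Lemma conv2 (Y : set V) (x z : V) (al : R) : 0 <= al <= 1 -> Y x -> Y z ->
  conv Y (al *: x + (1 - al) *: z).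
Proof.
move=> /andP[al0 al1] Yx Yz.
exists 2%N, (fun i : 'I_2 => if val i == 0%N then al else 1 - al),
  (fun i : 'I_2 => if val i == 0%N then x else z); split.
- by move=> i; case: ifP => _ //; rewrite subr_ge0.
- by rewrite big_ord_recl big_ord1 /= addrC subrK.
- by move=> i; case: ifP.
- by rewrite big_ord_recl big_ord1 /=.
Qed.

Lemma mid_conv (Y : set V) (a b : V) (t1 t2 t3 : R) :
  t1 < t2 -> t2 < t3 -> Y (a + t1 *: (b - a)) -> Y (a + t3 *: (b - a)) ->
  conv Y (a + t2 *: (b - a)).
Proof.
move=> h12 h23 Yx Yz.
pose al := (t3 - t2) / (t3 - t1).
have t31 : 0 < t3 - t1 by rewrite subr_gt0; apply: lt_trans h23.
have al01 : 0 <= al <= 1.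
  rewrite /al; apply/andP; split.
    by apply: divr_ge0; [rewrite subr_ge0 ltW | apply: ltW].
  by rewrite ler_pdivrMr // mul1r lerD2l lerN2 ltW.
have -> : a + t2 *: (b - a) = al *: (a + t1 *: (b - a)) + (1 - al) *: (a + t3 *: (b - a)).
  move: (b - a) => d; rewrite !scalerDr !scalerA addrACA -!scalerDl.
  have -> : al + (1 - al) = 1 by rewrite addrC subrK.
  have -> : al * t1 + (1 - al) * t3 = t2.
    rewrite /al; field; by rewrite lt0r_neq0.
  by rewrite scale1r.
exact: conv2.
Qed.


Lemma mid_false (S : seq V) a b u v w (tu tv tw : R) :
  conv_indep [set` S] -> u \in S -> v \in S -> w \in S -> u != v -> w != v ->
  u = a + tu *: (b - a) -> v = a + tv *: (b - a) -> w = a + tw *: (b - a) ->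
  tu < tv -> tv < tw -> False.
Proof.
move=> ci uS vS wS uv wv eu ev ew h1 h2.
apply: (ci v vS); rewrite {2}ev; apply: (mid_conv h1 h2).
- by rewrite -eu; split => //= /eqP; rewrite (negbTE uv).
- by rewrite -ew; split => //= /eqP; rewrite (negbTE wv).
Qed.

Lemma three_coll (S : seq V) a b x y z : conv_indep [set` S] ->
  x \in S -> y \in S -> z \in S -> x != y -> y != z -> x != z ->
  coll a b x -> coll a b y -> coll a b z -> False.
Proof.
move=> ci xS yS zS xy yz xz [t1 e1] [t2 e2] [t3 e3].
have yx : y != x by rewrite eq_sym.
have zy : z != y by rewrite eq_sym.
have zx : z != x by rewrite eq_sym.
have n12 : t1 != t2 by apply: contraNneq xy => h; rewrite e1 e2 h.
have n23 : t2 != t3 by apply: contraNneq yz => h; rewrite e3 e2 h.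
have n13 : t1 != t3 by apply: contraNneq xz => h; rewrite e1 e3 h.
case: (ltgtP t1 t2) n12 => // h12 _.
- case: (ltgtP t2 t3) n23 => // h23 _.
  + exact: (mid_false ci xS yS zS xy zy e1 e2 e3 h12 h23).
  + case: (ltgtP t1 t3) n13 => // h13 _.
    * exact: (mid_false ci xS zS yS xz yz e1 e3 e2 h13 h23).
    * exact: (mid_false ci zS xS yS zx yx e3 e1 e2 h13 h12).
- case: (ltgtP t2 t3) n23 => // h23 _.
  + case: (ltgtP t1 t3) n13 => // h13 _.
    * exact: (mid_false ci yS xS zS yx zx e2 e1 e3 h12 h13).
    * exact: (mid_false ci yS zS xS yz xz e2 e3 e1 h23 h13).
  + exact: (mid_false ci zS yS xS zy xy e3 e2 e1 h23 h12).
Qed.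


Lemma count_coll (S : seq V) a b : uniq S -> conv_indep [set` S] ->
  (count (fun x => `[< coll a b x >]) S <= 2)%N.
Proof.
move=> uS ci; rewrite leqNgt; apply/negP => h3.
set P := (fun x => `[< coll a b x >]) in h3.
have uF : uniq (filter P S) by rewrite filter_uniq.
rewrite -size_filter in h3.
have i0 : (0 < size (filter P S))%N by apply: leq_trans h3.
have i1 : (1 < size (filter P S))%N by apply: leq_trans h3.
have inF : forall i, (i < size (filter P S))%N -> nth 0 (filter P S) i \in S /\ coll a b (nth 0 (filter P S) i).
  move=> i hi; have := mem_nth 0 hi; rewrite mem_filter => /andP[/asboolP c iS]; by split.
have [xS cx] := inF _ i0.
have [yS cy] := inF _ i1.
have [zS cz] := inF _ h3.
apply: (three_coll ci xS yS zS _ _ _ cx cy cz); by rewrite nth_uniq.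
Qed.


Lemma count_sum (T : Type) (P : pred T) (s : seq T) :
  count P s = (\sum_(x <- s) (P x : nat))%N.
Proof. by elim: s => [|x s IH]; rewrite ?big_nil // big_cons /= IH. Qed.

Lemma sum_const_nat (T : Type) (s : seq T) (k : nat) :
  (\sum_(x <- s) k)%N = (size s * k)%N.
Proof. by rewrite big_const_seq count_predT iter_addn_0 mulnC. Qed.

Lemma step_pt (X : set V) :
  (forall n : nat, exists s : seq V,
      [/\ uniq s, (n <= size s)%N, [set` s] `<=` X & conv_indep [set` s]]) ->
  forall C : seq V, exists x, [/\ X x, x \notin C &
     forall a b, a \in C -> b \in C -> ~ coll a b x].
Proof.
move=> hyp C; set c := size C.
have [S [uS szS SX ciS]] := hyp (c + c * (c * 2)).+1%N.
apply: contrapT => nex.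
have pt : forall x, x \in S -> (1 <= (x \in C) +
    \sum_(a <- C) \sum_(b <- C) (`[< coll a b x >] : nat))%N.
  move=> x xS; case: (boolP (x \in C)) => // xC /=.
  have [a [b [aC [bC cab]]]] : exists a b, [/\ a \in C, b \in C & coll a b x].
    apply: contrapT => h; apply: nex; exists x; split => //; first exact: SX.
    move=> a b aC bC cab; apply: h; by exists a, b.
  rewrite add0n (big_rem _ aC) (big_rem _ bC) /=.
  have -> : `[< coll a b x >] = true by apply/asboolP.
  by rewrite -addnA leq_addr.
have : (size S <= c + c * (c * 2))%N.
  rewrite -sum1_size.
  apply: (@leq_trans (\sum_(x <- S) ((x \in C) +
    \sum_(a <- C) \sum_(b <- C) (`[< coll a b x >] : nat)))%N).
    rewrite big_seq_cond [X in (_ <= X)%N]big_seq_cond; apply: leq_sum => x /andP[xS _]; exact: pt.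
  rewrite big_split /= leq_add //.
    rewrite -count_sum -size_filter; apply: uniq_leq_size; first by rewrite filter_uniq.
    by move=> x; rewrite mem_filter => /andP[].
  rewrite exchange_big /= -sum_const_nat; apply: leq_sum => a _.
  rewrite exchange_big /= -sum_const_nat; apply: leq_sum => b _.
  rewrite -count_sum; exact: count_coll.
by rewrite leqNgt szS.
Qed.

End G1.


Lemma regroup (M : zmodType) n K (g : 'I_n -> nat) (a : 'I_n -> M) :
  (forall i, (g i < K)%N) ->
  \sum_(k < K) \sum_(i < n | g i == k) a i = \sum_(i < n) a i.
Proof.
move=> gK.
rewrite (eq_bigr (fun k : 'I_K => \sum_(i < n) (if g i == k then a i else 0))); last first.
  by move=> k _; rewrite big_mkcond.
rewrite exchange_big /=; apply: eq_bigr => i _.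
rewrite -big_mkcond (big_pred1 (Ordinal (gK i))) // => k /=.
Qed.

Lemma sum_delta (M : zmodType) K j (F : nat -> M) : (j < K)%N ->
  \sum_(k < K) (if (k : nat) == j then F k else 0) = F j.
Proof.
move=> jK; rewrite -big_mkcond (big_pred1 (Ordinal jK)) // => k /=.
Qed.

Section G2.
Context (R : realType) (V : lmodType R) (p : nat -> V).

Definition sel k := ~ exists c : nat -> R,
  \sum_(i < k) c i = 1 /\ p k = \sum_(i < k) c i *: p i.

Lemma key K (C : nat -> R) :
  (forall k, (k < K)%N -> C k != 0 -> sel k) ->
  \sum_(k < K) C k = 0 -> \sum_(k < K) C k *: p k = 0 ->
  forall k, (k < K)%N -> C k = 0.
Proof.
elim: K => [|K IH] hs h1 h2 k; first by [].
rewrite big_ord_recr /= in h1; rewrite big_ord_recr /= in h2.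
case: (eqVneq (C K) 0) => CK.
- rewrite CK addr0 in h1; rewrite CK scale0r addr0 in h2.
  rewrite ltnS leq_eqVlt => /orP[/eqP -> //|kK].
  apply: IH => // l lK; apply: hs; exact: ltnW.
- exfalso; apply: (hs K (ltnSn K) CK).
  exists (fun i => - C i / C K); split.
  + rewrite -mulr_suml sumrN.
    have -> : \sum_(i < K) C i = - C K by apply/eqP; rewrite -addr_eq0 ?h1 ?h2.
    by rewrite opprK divff.
  + have e : \sum_(i < K) C i *: p i = - (C K *: p K) by apply/eqP; rewrite -addr_eq0 ?h1 ?h2.
    rewrite (eq_bigr (fun i : 'I_K => (- (C K)^-1) *: (C i *: p i))); last first.
      by move=> i _; rewrite scalerA mulrC mulNr mulrN.
    by rewrite -scaler_sumr e scalerN scaleNr opprK scalerA mulVf // scale1r.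
Qed.

Lemma indep_sel : conv_indep (p @` [set k | sel k]).
Proof.
move=> y [j selj <-] [n [w [q [w0 w1 qY e]]]].
have : forall i, exists k, sel k /\ p k = q i.
  move=> i; have [[k sk pk] _] := qY i; by exists k.
move=> /choice [g Hg].
have gj : forall i, g i != j.
  move=> i; apply/eqP => gij; have [_ qn] := qY i; apply: qn.
  by have [_ <-] := Hg i; rewrite gij.
pose K := (maxn j (\max_(i < n) g i)).+1.
have gK : forall i, (g i < K)%N.
  move=> i; rewrite ltnS; apply: leq_trans (leq_maxr _ _); exact: leq_bigmax.
have jK : (j < K)%N by rewrite ltnS leq_maxl.
pose C := fun k => \sum_(i < n | g i == k) w i - ((k == j)%:R : R).
have Cj : C j = 0.
  apply: (key (K := K)) => //.
  - move=> k kK; rewrite /C; case: (eqVneq k j) => [-> //|kj].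
    rewrite subr0; case: (pselect (exists i, g i == k)) => [[i /eqP gik] _|nex].
      by have [sg _] := Hg i; rewrite -gik.
    by rewrite big1 ?eqxx // => i gik; exfalso; apply: nex; exists i.
  - rewrite /C sumrB regroup //.
    rewrite (eq_bigr (fun k : 'I_K => if (k : nat) == j then 1 else 0)); last first.
      by move=> k _; case: eqP.
    by rewrite (@sum_delta _ K j (fun _ => 1) jK) w1 subrr.
  - rewrite (eq_bigr (fun k : 'I_K => \sum_(i < n | g i == k) w i *: q i -
        (if (k : nat) == j then p k else 0))); last first.
      move=> k _; rewrite scalerBl scaler_suml; congr (_ - _).
        apply: eq_bigr => i /eqP gik; by have [_ <-] := Hg i; rewrite gik.
      by case: eqP => _; rewrite ?scale1r ?scale0r.
    by rewrite sumrB regroup // sum_delta // e subrr.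
move: Cj; rewrite /C big1; last by move=> i /eqP gij; have := gj i; rewrite gij eqxx.
by move=> /eqP; rewrite eqxx sub0r oppr_eq0 oner_eq0.
Qed.


Section Fin.
Context (N : nat) (selN : forall k, sel k -> (k < N)%N).

Definition rep (v : V) (C : nat -> R) :=
  [/\ forall k, C k != 0 -> sel k, \sum_(k < N) C k = 1 &
      v = \sum_(k < N) C k *: p k].

Lemma rep_uniq v C D : rep v C -> rep v D -> forall k, (k < N)%N -> C k = D k.
Proof.
move=> [sC sumC eC] [sD sumD eD] k kN; apply/eqP; rewrite -subr_eq0; apply/eqP.
apply: (key (K := N) (C := fun k => C k - D k)) => //.
- move=> l _; case: (eqVneq (C l) 0) => [Cl|/sC //].
  by rewrite Cl sub0r oppr_eq0 => /sD.
- by rewrite sumrB sumC sumD subrr.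
- rewrite (eq_bigr (fun k : 'I_N => C k *: p k - D k *: p k)); last by move=> l _; rewrite scalerBl.
  by rewrite sumrB -eC -eD subrr.
Qed.

Lemma rep_comb n (q : 'I_n -> V) (D : 'I_n -> nat -> R) (w : 'I_n -> R) :
  (forall i, rep (q i) (D i)) -> \sum_(i < n) w i = 1 ->
  rep (\sum_(i < n) w i *: q i) (fun k => \sum_(i < n) w i * D i k).
Proof.
move=> hD w1; split.
- move=> k; case: (pselect (exists i, D i k != 0)) => [[i]|nex].
    by have [sD _ _] := hD i; move=> /sD.
  rewrite big1 ?eqxx // => i _.
  case: (eqVneq (D i k) 0) => [->|dk]; first by rewrite mulr0.
  by exfalso; apply: nex; exists i.
- rewrite exchange_big /= -w1; apply: eq_bigr => i _.
  by have [_ sD _] := hD i; rewrite -mulr_sumr sD mulr1.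
- rewrite (eq_bigr (fun k : 'I_N => \sum_(i < n) w i *: (D i k *: p k))); last first.
    by move=> k _; rewrite scaler_suml; apply: eq_bigr => i _; rewrite scalerA.
  rewrite exchange_big /=; apply: eq_bigr => i _.
  by have [_ _ eD] := hD i; rewrite -scaler_sumr -eD.
Qed.

Lemma rep_ex m : exists C, rep (p m) C.
Proof.
elim/ltn_ind: m => m IH.
case: (pselect (sel m)) => sm.
- have mN := selN sm.
  exists (fun k => if k == m then 1 else 0); split.
  + by move=> k /=; case: ifP => [/eqP -> //|]; rewrite eqxx.
  + by rewrite (@sum_delta _ N m (fun _ => 1) mN).
  + rewrite -(@sum_delta _ N m p mN); apply: eq_bigr => k _ /=.
    by case: ifP => _; rewrite ?scale1r ?scale0r.
- have [c [c1 ec]] := contrapT sm.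
  have : forall i : 'I_m, exists C, rep (p i) C by move=> i; apply: IH.
  move=> /choice [D hD].
  exists (fun k => \sum_(i < m) c i * D i k).
  by rewrite ec; apply: (rep_comb (q := fun i : 'I_m => p i)).
Qed.

End Fin.
End G2.


Section Planar.
Context (R : realType) (X Y : nat -> R).

Definition Or i j k := (X j - X i) * (Y k - Y i) - (Y j - Y i) * (X k - X i).
Definition sl a b := (Y b - Y a) / (X b - X a).

Lemma lt_frac (A B d e : R) : 0 < d -> 0 < e -> (A / d < B / e) = (A * e < B * d).
Proof. by move=> d0 e0; rewrite ltr_pdivrMr // mulrAC ltr_pdivlMr. Qed.

Lemma sl_sym a b : sl a b = sl b a.
Proof. by rewrite /sl -opprB -(opprB (X a)) invrN mulrNN. Qed.

Lemma sl1 a b c : X a < X b -> X b < X c -> 0 < Or a b c -> sl a b < sl a c.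
Proof.
move=> ab bc O; rewrite /sl lt_frac ?subr_gt0 //; last exact: lt_trans bc.
rewrite -subr_gt0; move: O; rewrite /Or.
have -> : (Y c - Y a) * (X b - X a) - (Y b - Y a) * (X c - X a) =
   (X b - X a) * (Y c - Y a) - (Y b - Y a) * (X c - X a) by ring.
by [].
Qed.

Lemma sl2 a b c : X a < X b -> X b < X c -> 0 < Or a b c -> sl a c < sl b c.
Proof.
move=> ab bc O; rewrite /sl lt_frac ?subr_gt0 //; last exact: lt_trans bc.
rewrite -subr_gt0; move: O; rewrite /Or.
have -> : (Y c - Y b) * (X c - X a) - (Y c - Y a) * (X c - X b) =
   (X b - X a) * (Y c - Y a) - (Y b - Y a) * (X c - X a) by ring.
by [].
Qed.

Lemma sl_eq a b : X a != X b -> Y b = Y a + sl a b * (X b - X a).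
Proof. by move=> ab; rewrite /sl divfK ?subr_eq0 1?eq_sym // addrC subrK. Qed.

Lemma planar (H : set nat) :
  (forall n, exists m, (n <= m)%N /\ H m) ->
  (forall i j, H i -> H j -> (i < j)%N -> X i < X j) ->
  (forall i j k, H i -> H j -> H k -> (i < j)%N -> (j < k)%N -> 0 < Or i j k) ->
  forall j, H j -> exists s c0 : R, Y j - s * X j - c0 = 0 /\
     forall q, H q -> q != j -> 0 < Y q - s * X q - c0.
Proof.
move=> Hunb Xinc Opos j Hj.
have exk : exists k, `[< H k /\ (j < k)%N >].
  have [m [jm Hm]] := Hunb j.+1; exists m; apply/asboolP; split => //.
case: (ex_minnP exk) => k /asboolP [Hk jk] kmin.
have kmin' : forall q, H q -> (j < q)%N -> (k <= q)%N.
  by move=> q Hq jq; apply: kmin; apply/asboolP.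
have hq_gt : forall s q, s < sl j k -> H q -> (j < q)%N ->
    0 < Y q - s * X q - (Y j - s * X j).
  move=> s q sk Hq jq.
  have Xjq := Xinc _ _ Hj Hq jq.
  have slq : sl j k <= sl j q.
    have := kmin' q Hq jq; rewrite leq_eqVlt => /orP[/eqP -> //|kq].
    apply: ltW; apply: sl1; [exact: Xinc | exact: Xinc | exact: Opos].
  rewrite (sl_eq (negbT (lt_eqF Xjq))).
  suff -> : Y j + sl j q * (X q - X j) - s * X q - (Y j - s * X j) =
       (X q - X j) * (sl j q - s).
    by apply: mulr_gt0; rewrite subr_gt0 //; apply: lt_le_trans slq.
  by ring.
case: (pselect (exists i, H i /\ (i < j)%N)) => [exi|nexi]; last first.
  exists (sl j k - 1), (Y j - (sl j k - 1) * X j); split; first by rewrite subrr.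
  move=> q Hq qj; case: (ltngtP q j) qj => // [qltj|jltq] _.
    by exfalso; apply: nexi; exists q.
  by apply: hq_gt => //; rewrite ltrBlDr ltrDl ltr01.
have exi' : exists i, `[< H i /\ (i < j)%N >].
  by have [i hi] := exi; exists i; apply/asboolP.
have ibnd : forall i, `[< H i /\ (i < j)%N >] -> (i <= j)%N.
  by move=> i /asboolP [_ /ltnW].
case: (ex_maxnP exi' ibnd) => i0 /asboolP [Hi0 i0j] i0max.
have i0max' : forall q, H q -> (q < j)%N -> (q <= i0)%N.
  by move=> q Hq qj; apply: i0max; apply/asboolP.
have slik : sl i0 j < sl j k.
  have X1 := Xinc _ _ Hi0 Hj i0j; have X2 := Xinc _ _ Hj Hk jk.
  have O := Opos _ _ _ Hi0 Hj Hk i0j jk.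
  exact: lt_trans (sl1 X1 X2 O) (sl2 X1 X2 O).
pose s := (sl i0 j + sl j k) / 2.
have s1 : sl i0 j < s by rewrite /s; lra.
have s2 : s < sl j k by rewrite /s; lra.
exists s, (Y j - s * X j); split; first by rewrite subrr.
move=> q Hq qj; case: (ltngtP q j) qj => // [qltj|jltq] _; last exact: hq_gt.
have Xqj := Xinc _ _ Hq Hj qltj.
have slq : sl q j <= sl i0 j.
  have := i0max' q Hq qltj; rewrite leq_eqVlt => /orP[/eqP -> //|qi].
  apply: ltW; apply: sl2; [exact: Xinc | exact: Xinc | exact: Opos].
rewrite (sl_eq (negbT (gt_eqF Xqj))) sl_sym.
suff -> : Y j + sl q j * (X q - X j) - s * X q - (Y j - s * X j) =
     (X j - X q) * (s - sl q j).
  by apply: mulr_gt0; rewrite subr_gt0 //; apply: le_lt_trans s1.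
by ring.
Qed.

End Planar.


Lemma sum_pos (R : realType) n (w F : 'I_n -> R) :
  (forall i, 0 <= w i) -> \sum_(i < n) w i = 1 -> (forall i, 0 < F i) ->
  0 < \sum_(i < n) w i * F i.
Proof.
move=> w0 w1 F0; rewrite lt_def sumr_ge0 ?andbT; last first.
  by move=> i _; apply: mulr_ge0 => //; apply: ltW.
apply/negP => /eqP/psumr_eq0P h.
have : \sum_(i < n) w i = 0.
  have h' := h (fun i _ => mulr_ge0 (w0 i) (ltW (F0 i))).
  apply: big1 => i _; have := h' i isT.
  by move=> /eqP; rewrite mulf_eq0 (gt_eqF (F0 i)) orbF => /eqP.
by rewrite w1 => /eqP; rewrite oner_eq0.
Qed.

Section Final.
Context (R : realType) (V : lmodType R) (p : nat -> V) (pinj : injective p)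
  (nc : forall i j k, (i < j)%N -> (j < k)%N -> ~ coll (p i) (p j) (p k))
  (N : nat) (selN : forall k, sel p k -> (k < N)%N).

Lemma fin_case : exists H : set nat, infinite_set H /\ conv_indep (p @` H).
Proof.
have [lam Hlam] := choice (rep_ex selN).
have aff : forall j n (w : 'I_n -> R) (g : 'I_n -> nat), \sum_(i < n) w i = 1 ->
    p j = \sum_(i < n) w i *: p (g i) -> forall k, (k < N)%N ->
    lam j k = \sum_(i < n) w i * lam (g i) k.
  move=> j n w g w1 e k kN.
  have h2 := rep_comb (q := fun i => p (g i)) (D := fun i => lam (g i)) (fun i => Hlam (g i)) w1.
  rewrite -e in h2; exact: (rep_uniq (Hlam j) h2 kN).
have diffp : forall i j, p j - p i = \sum_(k < N) (lam j k - lam i k) *: p k.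
  move=> i j; have [_ _ ej] := Hlam j; have [_ _ ei] := Hlam i.
  rewrite {1}ej {1}ei -sumrB; apply: eq_bigr => k _; by rewrite scalerBl.
pose M i j k (u v : 'I_N) := (lam j u - lam i u) * (lam k v - lam i v) -
   (lam j v - lam i v) * (lam k u - lam i u).
have minor : forall i j k, (i < j)%N -> (j < k)%N -> exists u v, M i j k u v != 0.
  move=> i j k ij jk; apply: contrapT => hno.
  have all0 : forall u v, M i j k u v = 0.
    move=> u v; apply/eqP; apply: contrapT => hn; apply: hno; exists u, v; exact/negP.
  case: (pselect (exists u : 'I_N, lam j u - lam i u != 0)) => [[u au]|nou].
  - apply: (nc ij jk); exists ((lam k u - lam i u) / (lam j u - lam i u)).
    apply/eqP; rewrite addrC -subr_eq; apply/eqP.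
    rewrite diffp diffp scaler_sumr; apply: eq_bigr => l _; rewrite scalerA; congr (_ *: _).
    have E : (lam j u - lam i u) * (lam k l - lam i l) =
             (lam j l - lam i l) * (lam k u - lam i u).
      by apply/eqP; rewrite -subr_eq0; apply/eqP; exact: all0.
    transitivity ((lam j u - lam i u) * (lam k l - lam i l) / (lam j u - lam i u)).
      by field.
    by rewrite E; field.
  - have : p j - p i = 0.
      rewrite diffp big1 // => l _.
      have -> : lam j l - lam i l = 0.
        by apply/eqP; apply: contrapT => h; apply: nou; exists l; apply/negP.
      by rewrite scale0r.
    move=> /eqP; rewrite subr_eq0 => /eqP /pinj ji.
    by move: ij; rewrite ji ltnn.
have [u0 _] : exists u : 'I_N, True.
  by have [u [v _]] := minor 0%N 1%N 2%N isT isT; exists u.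
have [uv Huv] : {uv : nat * nat * nat -> 'I_N * 'I_N & forall t,
    (t.1.1 < t.1.2)%N -> (t.1.2 < t.2)%N -> M t.1.1 t.1.2 t.2 (uv t).1 (uv t).2 != 0}.
  apply: (@choice _ _ (fun (t : nat * nat * nat) (y : 'I_N * 'I_N) => (t.1.1 < t.1.2)%N ->
    (t.1.2 < t.2)%N -> M t.1.1 t.1.2 t.2 y.1 y.2 != 0)) => -[[i j] k] /=.
  case: (pselect ((i < j)%N /\ (j < k)%N)) => [[ij jk]|nt].
    by have [u [v h]] := minor i j k ij jk; exists (u, v).
  by exists (u0, u0) => ij jk; exfalso; apply: nt.
pose f := fun i j k => ((uv (i, j, k), lam i (uv (i, j, k)).1 < lam j (uv (i, j, k)).1,
   lam j (uv (i, j, k)).1 < lam i (uv (i, j, k)).1,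
   0 < M i j k (uv (i, j, k)).1 (uv (i, j, k)).2) : ('I_N * 'I_N * bool * bool * bool)).
have [H [c [Hinf Hc]]] := ramsey3 f.
move: c Hc => [[[[u v] bl] bg] bp] Hc.
have trip : forall i j k, H i -> H j -> H k -> (i < j)%N -> (j < k)%N ->
   [/\ M i j k u v != 0, bl = (lam i u < lam j u), bg = (lam j u < lam i u) &
        bp = (0 < M i j k u v)].
  move=> i j k Hi Hj Hk ij jk; have := Hc i j k Hi Hj Hk ij jk.
  have := Huv (i, j, k) ij jk; rewrite /f /=.
  case: (uv (i, j, k)) => u' v' /= hM [eu ev e1 e2 e3].
  by subst u' v'; split.
have Hunb := proj1 (infNP H) Hinf.
have pairs : forall i j, H i -> H j -> (i < j)%N ->
    bl = (lam i u < lam j u) /\ bg = (lam j u < lam i u).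
  move=> i j Hi Hj ij; have [k [jk Hk]] := Hunb j.+1.
  by have [_ e1 e2 _] := trip i j k Hi Hj Hk ij jk.
have bgt : ~~ bl -> bg.
  move=> nbl; apply: contrapT => /negP nbg.
  have [i [_ Hi]] := Hunb 0%N.
  have [j [ij Hj]] := Hunb i.+1.
  have [k [jk Hk]] := Hunb j.+1.
  have [hM _ _ _] := trip i j k Hi Hj Hk ij jk.
  have eq2 : forall a b, H a -> H b -> (a < b)%N -> lam a u = lam b u.
    move=> a b Ha Hb ab; have [e1 e2] := pairs a b Ha Hb ab.
    apply/eqP; rewrite eq_le !leNgt -e1 -e2; by rewrite (negbTE nbl) (negbTE nbg).
  move: hM; rewrite /M -(eq2 i j Hi Hj ij) -(eq2 i k Hi Hk (ltn_trans ij jk)).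
  by rewrite !subrr mul0r mulr0 subrr eqxx.
pose sg : R := if bl then 1 else -1.
pose tau : R := sg * (if bp then 1 else -1).
pose Xf := fun n => sg * lam n u.
pose Yf := fun n => tau * lam n v.
have Xinc : forall i j, H i -> H j -> (i < j)%N -> Xf i < Xf j.
  move=> i j Hi Hj ij; have [e1 e2] := pairs i j Hi Hj ij; rewrite /Xf /sg.
  case: (boolP bl) => hbl; first by rewrite !mul1r -e1.
  by rewrite !mulN1r ltrN2 -e2 bgt.
have Opos : forall i j k, H i -> H j -> H k -> (i < j)%N -> (j < k)%N -> 0 < Or Xf Yf i j k.
  move=> i j k Hi Hj Hk ij jk; have [hM _ _ hbp] := trip i j k Hi Hj Hk ij jk.
  have -> : Or Xf Yf i j k = (sg * tau) * M i j k u v by rewrite /Or /Xf /Yf /M; ring.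
  have -> : sg * tau = if bp then 1 else -1.
    by rewrite /tau /sg mulrA; case: (bl); rewrite ?mulr1 ?mulrNN ?mulr1 mul1r.
  case: (boolP bp) hbp => hb hbp; first by rewrite mul1r -hbp.
  rewrite mulN1r oppr_gt0 lt_neqAle hM /=.
  by rewrite leNgt -hbp.
exists H; split => //.
move=> y [j Hj <-] [n [w [q [w0 w1 qY e]]]].
have : forall i, exists k, H k /\ p k = q i.
  by move=> i; have [[k Hk pk] _] := qY i; exists k.
move=> /choice [g Hg].
have gj : forall i, g i != j.
  move=> i; apply/eqP => gij; have [_ qn] := qY i; apply: qn.
  by have [_ <-] := Hg i; rewrite gij.
have e' : p j = \sum_(i < n) w i *: p (g i).
  by rewrite e; apply: eq_bigr => i _; have [_ ->] := Hg i.
have [s [c0 [hj hpos]]] := planar Hunb Xinc Opos Hj.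
pose hf := fun m => Yf m - s * Xf m - c0.
have Ej : hf j = \sum_(i < n) w i * hf (g i).
  rewrite /hf /Xf /Yf (aff j n w g w1 e' u (ltn_ord u)) (aff j n w g w1 e' v (ltn_ord v)).
  rewrite [RHS](eq_bigr (fun i => tau * (w i * lam (g i) v) - (s * sg) * (w i * lam (g i) u) - c0 * w i)); last first.
    by move=> i _; ring.
  rewrite !sumrB -!mulr_sumr w1; ring.
have := sum_pos w0 w1 (fun i => hpos (g i) (proj1 (Hg i)) (gj i)).
by rewrite -/hf -Ej /hf hj ltxx.
Qed.

End Final.

Unset Implicit Arguments.

Theorem corollary5p3 (R : realType) (V : lmodType R) (X : set V) :
  (forall n : nat, exists s : seq V,
      [/\ uniq s, (n <= size s)%N, [set` s] `<=` X & conv_indep [set` s]]) ->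
  exists Y : set V, [/\ Y `<=` X, infinite_set Y & conv_indep Y].
Proof.
move=> hyp.
have [p Hp] := seq_build (step_pt hyp).
have pX : forall n, X (p n) by move=> n; have [] := Hp n.
have pnew : forall m n, (m < n)%N -> p n != p m.
  move=> m n mn; have [_ nin _] := Hp n; apply: contraNneq nin => ->.
  by apply: map_f; rewrite mem_iota add0n.
have pinj : injective p.
  move=> m n e; case: (ltngtP m n) => // h.
  - by have := pnew _ _ h; rewrite e eqxx.
  - by have := pnew _ _ h; rewrite e eqxx.
have nc : forall i j k, (i < j)%N -> (j < k)%N -> ~ coll (p i) (p j) (p k).
  move=> i j k ij jk; have [_ _ h] := Hp k; apply: h; apply: map_f; rewrite mem_iota add0n //.
  exact: ltn_trans ij jk.
case: (pselect (infinite_set [set k | sel p k])) => [inf|fin].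
  exists (p @` [set k | sel p k]); split.
  - by move=> y [k _ <-].
  - exact: inf_image.
  - exact: indep_sel.
have [N selN] : exists N, forall k, sel p k -> (k < N)%N.
  apply: contrapT => hn; apply: fin; apply/infNP => n.
  apply: contrapT => hm; apply: hn; exists n => k sk.
  rewrite ltnNge; apply/negP => nk; apply: hm; by exists k.
have [H [Hinf Hind]] := fin_case pinj nc selN.
exists (p @` H); split.
- by move=> y [k _ <-].
- exact: inf_image.
- exact: Hind.
Qed.
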